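(* Let $\overline{\Gamma'}$ be the undirected graph with vertex set $\Z[\tfrac12]$ in which two distinct vertices $f,g$ are adjacent iff $|f-g|=2^i$ for some $i\in\Z$. For $n\ge1$ let $e(n)$ be the number of unordered pairs $\{x,y\}\subset\{1,\dots,n\}$ with $|x-y|$ a power of $2$ (equivalently $e(n)=kn-2^k+1$ where $2^{k-1}<n\leq2^k$). Then every subgraph $G$ of $\overline{\Gamma'}$ with $n$ vertices satisfies $|E(G)|\leq e(n)$. *)

(* Defs.v *)
From mathcomp Require Import all_boot all_order all_algebra.
Set Implicit Arguments. Unset Strict Implicit. Unset Printing Implicit Defensive.
Import Order.TTheory GRing.Theory Num.Theory.
Local Open Scope ring_scope.

(* Z[1/2] as the dyadic rationals: denominator (in lowest terms) a power of 2. *)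
Definition dyadic (q : rat) : Prop := exists k : nat, denq q = (2 ^ k)%N%:Z.

Definition adj (f g : rat) : Prop :=
  f <> g /\ exists i : int, `|f - g| = (2%:Q) ^ i.

Definition is_pow2 (d : nat) : bool := [exists k : 'I_d.+1, d == (2 ^ k)%N].

(* e(n) = number of unordered pairs {x,y} of {1..n} (here encoded as {0..n-1},
   shift-invariant) with |x - y| a power of 2; pairs counted with x < y. *)
Definition e (n : nat) : nat :=
  #|[set p : 'I_n * 'I_n | (p.1 < p.2)%N & is_pow2 (p.2 - p.1)%N]|.

(* Main.v *)
Require Import Defs.
From mathcomp Require Import all_boot all_order all_algebra.
From mathcomp Require Import zify.
Import Order.TTheory GRing.Theory Num.Theory.

Lemma is_pow2P d : reflect (exists k, d = 2 ^ k) (is_pow2 d).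
Proof.
apply: (iffP existsP) => [[k /eqP ->]|[k ->]]; first by exists k.
have hk : k < (2 ^ k).+1 by apply: (ltn_trans (ltn_expl k (ltnSn 1))).
by exists (Ordinal hk).
Qed.

Lemma pow2_double d : is_pow2 d.*2 = is_pow2 d.
Proof.
apply/is_pow2P/is_pow2P => [[k hk]|[k ->]]; last by exists k.+1; rewrite expnS -mul2n.
case: k hk => [|k]; first by rewrite expn0 => /(congr1 odd); rewrite odd_double.
by rewrite expnS -mul2n => /eqP; rewrite eqn_pmul2l // => /eqP ->; exists k.
Qed.

Lemma pow2_odd d : odd d -> is_pow2 d = (d == 1).
Proof.
move=> od; apply/is_pow2P/eqP => [[[|k] hk]|->]; last by exists 0.
  by rewrite hk.
by move: od; rewrite hk expnS oddM.
Qed.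

Definition F (x y : nat) : nat := ((x < y) && is_pow2 (y - x)).
Definition S (x y : nat) : nat := (y == x.+1).
Definition DS (f : nat -> nat -> nat) (s : seq nat) := \sum_(x <- s) \sum_(y <- s) f x y.
Definition CR (f : nat -> nat -> nat) (A B : seq nat) := \sum_(x <- A) \sum_(y <- B) f x y.

Lemma F_half x y : odd x = odd y -> F x y = F x./2 y./2.
Proof.
move=> h; have ex := odd_double_half x; have ey := odd_double_half y.
move: (x./2) (y./2) ex ey => a b ex ey; rewrite -[in LHS]ex -[in LHS]ey -h.
by rewrite /F ltn_add2l ltn_double subnDl -doubleB pow2_double.
Qed.

Lemma F_cross x y : odd x != odd y -> F x y <= S x y.
Proof.
rewrite /F /S; case: (ltnP x y) => //= hxy hodd.
case hp: (is_pow2 (y - x)) => //.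
move: hp; rewrite pow2_odd; last by rewrite oddB ?(ltnW hxy) // addbC; case: (odd x) (odd y) hodd => [] [].
move/eqP => h; have -> : y = x.+1 by lia.
by rewrite eqxx.
Qed.

Lemma DS_cat f A B : DS f (A ++ B) = DS f A + DS f B + (CR f A B + CR f B A).
Proof.
rewrite /DS /CR big_cat /=.
under eq_bigr do rewrite big_cat /=.
under [X in _ + X]eq_bigr do rewrite big_cat /=.
rewrite !big_split /=; lia.
Qed.

Lemma DS_perm f A B : perm_eq A B -> DS f A = DS f B.
Proof.
move=> pAB; rewrite /DS (perm_big _ pAB) /=; apply: eq_bigr => x _.
exact: perm_big.
Qed.

Lemma sumS_l x B : \sum_(y <- B) S x y = count_mem x.+1 B.
Proof. by rewrite /S -sum1_count [RHS]big_mkcond. Qed.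

Lemma sumS_r y B : \sum_(x <- B) S x y <= count_mem y.-1 B.
Proof.
rewrite -sum1_count [X in _ <= X]big_mkcond /=; apply: leq_sum => x _; rewrite /S.
by case: (y =P x.+1) => // ->; rewrite /= eqxx.
Qed.

Lemma CR_le_l A B : uniq B -> CR S A B <= size A.
Proof.
move=> uB; rewrite /CR -sum1_size; apply: leq_sum => x _.
by rewrite sumS_l count_uniq_mem // leq_b1.
Qed.

Lemma CR_le_r A B : uniq A -> CR S A B <= size B.
Proof.
move=> uA; rewrite /CR exchange_big /= -sum1_size; apply: leq_sum => y _.
by apply: leq_trans (sumS_r _ _) _; rewrite count_uniq_mem // leq_b1.
Qed.

Lemma ex_max (W : seq nat) : W != [::] -> exists2 m, m \in W & forall x, x \in W -> x <= m.
Proof.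
elim: W => // a W IH _; case: (eqVneq W [::]) => [->|/IH [m mW hm]].
  by exists a; rewrite ?inE // => x; rewrite inE => /eqP ->.
case: (leqP a m) => ham.
  by exists m; rewrite ?inE ?mW ?orbT // => x; rewrite inE => /orP [/eqP ->//|]; apply: hm.
exists a; rewrite ?inE ?eqxx // => x; rewrite inE => /orP [/eqP ->//|/hm h].
exact: leq_trans h (ltnW ham).
Qed.

Lemma DS_S_le W : uniq W -> DS S W <= (size W).-1.
Proof.
move=> uW; case: (eqVneq W [::]) => [->|/ex_max [m mW hm]]; first by rewrite /DS big_nil.
rewrite /DS; under eq_bigr do rewrite sumS_l count_uniq_mem //.
rewrite (bigD1_seq m) //=.
have -> : (m.+1 \in W) = false by apply/negP => /hm; rewrite ltnn.
rewrite add0n; apply: (@leq_trans (\sum_(i <- W | i != m) 1)).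
  by apply: leq_sum => i _; rewrite leq_b1.
rewrite sum1_count -(count_predC (pred1 m) W) /= count_uniq_mem // mW.
by rewrite add1n.
Qed.

Definition g n := DS F (iota 0 n).
Definition P n := \sum_(x <- iota 0 n) F x n.

Lemma g_succ n : g n.+1 = g n + P n.
Proof.
rewrite /g -addn1 iotaD add0n DS_cat /=.
have -> : DS F [:: n] = 0 by rewrite /DS !big_cons !big_nil /F ltnn.
have -> : CR F [:: n] (iota 0 n) = 0.
  rewrite /CR big_cons big_nil addn0 big1_seq // => y; rewrite mem_iota /F => /andP [_ hy].
  by rewrite ltnNge ltnW.
rewrite /CR /P addn0 addn0; congr (_ + _); apply: eq_bigr => x _; by rewrite big_cons big_nil addn0.
Qed.

Lemma P_succ n : P n.+1 = P n + is_pow2 n.+1.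
Proof.
rewrite /P /= big_cons /F /= subn0 addnC; congr (_ + _).
rewrite -add1n iotaDl big_map; apply: eq_bigr => x _.
by rewrite /F add1n ltnS subSS.
Qed.

Lemma P0 : P 0 = 0. Proof. by rewrite /P big_nil. Qed.
Lemma g0 : g 0 = 0. Proof. by rewrite /g /DS big_nil. Qed.

Lemma pow2_1 : is_pow2 1. Proof. by apply/is_pow2P; exists 0. Qed.

Lemma pow2_oddbig m : 0 < m -> is_pow2 m.*2.+1 = false.
Proof. by move=> hm; rewrite pow2_odd ?odd_double //; lia. Qed.

Lemma P_double m : 0 < m -> P m.*2 = (P m).+1.
Proof.
elim: m => // m IH _; case: m IH => [|m] IH.
  change (P 2 = (P 1).+1); rewrite !P_succ P0 pow2_1 (_ : is_pow2 2 = true) //.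
  by apply/is_pow2P; exists 1.
have -> : (m.+2).*2 = ((m.+1).*2).+2 by rewrite doubleS.
rewrite (P_succ ((m.+1).*2).+1) (P_succ (m.+1).*2) IH // pow2_oddbig //.
rewrite (_ : ((m.+1).*2).+2 = (m.+2).*2); last by rewrite doubleS.
rewrite pow2_double (P_succ m.+1); lia.
Qed.

Lemma P_odd m : 0 < m -> P m.*2.+1 = P m.*2.
Proof. by move=> hm; rewrite P_succ pow2_oddbig // addn0. Qed.

Lemma g_rec m : g m.*2.+1 = g m.+1 + g m + m.*2 /\ g m.*2.+2 = (g m.+1).*2 + m.*2.+1.
Proof.
elim: m => [|m [IH1 IH2]].
  by rewrite /= !g_succ g0 !P_succ P0 pow2_1.
have e1 : g (m.+1).*2.+1 = g m.+2 + g m.+1 + (m.+1).*2.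
  rewrite g_succ doubleS IH2 -doubleS P_double // (g_succ m.+1); lia.
split => //.
rewrite g_succ e1 P_odd // P_double // (g_succ m.+1); lia.
Qed.

Lemma g_even p : 0 < p -> g p.*2 = (g p).*2 + p.*2 - 1.
Proof. by case: p => // p _; rewrite doubleS (proj2 (g_rec p)) (g_succ p); lia. Qed.

Lemma g_odd p : g p.*2.+1 = g p.+1 + g p + p.*2.
Proof. exact: (proj1 (g_rec p)). Qed.

Definition M a b := minn (a + b - 1) (2 * minn a b).

Lemma NL n : forall a b, a + b <= n -> g a + g b + M a b <= g (a + b).
Proof.
elim: n => [|n IH] a b hab.
  have [-> ->] : a = 0 /\ b = 0 by lia.
  by rewrite g0 /M.
case: (posnP a) => [->|ha0]; first by rewrite g0 !add0n /M; lia.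
case: (posnP b) => [->|hb0]; first by rewrite g0 !addn0 /M; lia.
move: (odd_double_half a) (odd_double_half b).
move: (a./2) (b./2) => p q; case: (odd a); case: (odd b) => /= ha hb.
-
  have I1 := IH p.+1 q ltac:(lia). have I2 := IH p q.+1 ltac:(lia).
  rewrite -ha -hb (_ : 1 + p.*2 + (1 + q.*2) = (p + q).+1.*2); last by lia.
  rewrite g_even // !add1n !g_odd addSn addnS in I1 I2 *.
  rewrite /M in I1 I2 *; lia.
-
  have I1 := IH p.+1 q ltac:(lia). have I2 := IH p q ltac:(lia).
  rewrite -ha -hb (_ : 1 + p.*2 + (0 + q.*2) = (p + q).*2.+1); last by lia.
  rewrite g_odd add0n g_even ?add1n ?g_odd; last by lia.
  rewrite addSn in I1 *; rewrite /M in I1 I2 *; lia.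
-
  have I1 := IH p q.+1 ltac:(lia). have I2 := IH p q ltac:(lia).
  rewrite -ha -hb (_ : 0 + p.*2 + (1 + q.*2) = (p + q).*2.+1); last by lia.
  rewrite g_odd add0n g_even ?add1n ?g_odd; last by lia.
  rewrite addnS in I1 *; rewrite /M in I1 I2 *; lia.
-
  have I2 := IH p q ltac:(lia).
  rewrite -ha -hb !add0n (_ : p.*2 + q.*2 = (p + q).*2); last by lia.
  rewrite !g_even; try lia.
  rewrite /M in I2 *; lia.
Qed.

Lemma DS_small W : size W <= 1 -> DS F W = 0.
Proof.
case: W => [|x [|y W]] // _; first by rewrite /DS big_nil.
by rewrite /DS !big_cons !big_nil /F ltnn.
Qed.

Lemma DS_half (B : seq nat) : {in B &, forall x y, odd x = odd y} -> DS F B = DS F (map half B).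
Proof.
move=> hB; rewrite /DS big_map; apply: eq_big_seq => x hx; rewrite big_map.
by apply: eq_big_seq => y hy; apply: F_half; apply: hB.
Qed.

Lemma half_inj (B : seq nat) : {in B &, forall x y, odd x = odd y} -> {in B &, injective half}.
Proof.
move=> hB x y hx hy e; rewrite -(odd_double_half x) -(odd_double_half y) e.
by rewrite (hB x y hx hy).
Qed.

Lemma leq_sum_in (r : seq nat) (E1 E2 : nat -> nat) :
  (forall i, i \in r -> E1 i <= E2 i) -> \sum_(i <- r) E1 i <= \sum_(i <- r) E2 i.
Proof.
by move=> h; rewrite [X in X <= _]big_seq [X in _ <= X]big_seq; apply: leq_sum.
Qed.

Lemma main_nat m : forall W : seq nat, uniq W -> (forall x, x \in W -> x <= m) ->
  DS F W <= g (size W).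
Proof.
elim: m => [|m IH] W uW hW.
  have : size W <= 1.
    apply: (@uniq_leq_size _ W [:: 0]) => // x /hW; rewrite leqn0 inE.
    by move=> ->.
  by move/DS_small ->.
case: (leqP (size W) 1) => [/DS_small -> //|hsz].
set B := filter odd W; set A := filter (predC odd) W.
have pW : perm_eq (B ++ A) W by rewrite perm_filterC.
have szW : size W = size B + size A by rewrite -(perm_size pW) size_cat.
have uB : uniq B by apply: filter_uniq.
have uA : uniq A by apply: filter_uniq.
have pB : {in B &, forall x y, odd x = odd y}.
  by move=> x y; rewrite !mem_filter => /andP [-> _] /andP [-> _].
have pA : {in A &, forall x y, odd x = odd y}.
  move=> x y; rewrite !mem_filter /= => /andP [hx _] /andP [hy _].
  by move: hx hy; case: (odd x); case: (odd y).
have hh : forall C, {subset C <= W} -> {in C &, forall x y, odd x = odd y} -> uniq C ->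
    DS F C <= g (size C).
  move=> C sC pC uC; rewrite DS_half // -(size_map half C); apply: IH.
    by rewrite map_inj_in_uniq //; apply: half_inj.
  move=> y /mapP [x /sC /hW hx ->]; have := odd_double_half x; lia.
have IB := hh B (mem_subseq (filter_subseq _ _)) pB uB.
have IA := hh A (mem_subseq (filter_subseq _ _)) pA uA.
have cr : forall C D, {subset C <= B} -> {subset D <= A} ->
    CR F C D <= CR S C D /\ CR F D C <= CR S D C.
  move=> C D sC sD; split; apply: leq_sum_in => x hx; apply: leq_sum_in => y hy; apply: F_cross.
    move: (sC x hx) (sD y hy); rewrite !mem_filter /= => /andP [-> _] /andP [-> _] //.
  move: (sD x hx) (sC y hy); rewrite !mem_filter /= => /andP [hx' _] /andP [-> _].
  by move: hx'; case: (odd x).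
have [c1 c2] := cr B A (fun x h => h) (fun x h => h).
have l1 := CR_le_l B A uA. have l2 := CR_le_r B A uB.
have l3 := CR_le_l A B uB. have l4 := CR_le_r A B uA.
have l5 := DS_S_le W uW.
rewrite -(DS_perm S _ _ pW) DS_cat in l5.
rewrite -(DS_perm F _ _ pW) DS_cat szW.
have := NL (size B + size A) (size B) (size A) (leqnn _).
rewrite /M => hN; rewrite szW in l5; move: (CR F B A) (CR F A B) (CR S B A) (CR S A B) (DS S B) (DS S A) (DS F A) (DS F B) c1 c2 l1 l2 l3 l4 l5 hN IB IA => x1 x2 x3 x4 x5 x6 x7 x8 h1 h2 h3 h4 h5 h6 h7 h8 h9 h10; clearbody A B; move: (size A) (size B) (g (size A)) (g (size B)) (g (size B + size A)) h1 h2 h3 h4 h5 h6 h7 h8 h9 h10; clear; move=> *; lia.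
Qed.

Lemma e_g n : e n = g n.
Proof.
rewrite /e /g /DS cardsE -sum1_card.
have -> : \sum_(x <- iota 0 n) \sum_(y <- iota 0 n) F x y =
          \sum_(i < n) \sum_(j < n) F i j.
  rewrite -(big_mkord xpredT (fun i => \sum_(j < n) F i j)) /index_iota subn0.
  by apply: eq_bigr => i _; rewrite -(big_mkord xpredT (F i)) /index_iota subn0.
rewrite pair_big big_mkcond /=; apply: eq_bigr => p _.
by rewrite /F unfold_in; case: (_ && _).
Qed.

Local Open Scope ring_scope.

Lemma natz_r (n : nat) : ((n%:Z)%:~R : rat) = n%:R.
Proof. by []. Qed.

Lemma exK (V : seq rat) : (forall v, v \in V -> dyadic v) ->
  exists K : nat, forall v, v \in V -> exists2 k : nat, (k <= K)%N & denq v = (2 ^ k)%N%:Z.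
Proof.
elim: V => [|a V IH] hV; first by exists 0%N.
have [K hK] : exists K : nat, forall v, v \in V -> exists2 k : nat, (k <= K)%N & denq v = (2 ^ k)%N%:Z.
  by apply: IH => v hv; apply: hV; rewrite inE hv orbT.
have [ka hka] := hV a (mem_head _ _).
exists (maxn ka K) => v; rewrite inE => /orP [/eqP ->|/hK [k hk hd]].
  by exists ka; rewrite ?leq_maxl.
by exists k => //; rewrite (leq_trans hk) ?leq_maxr.
Qed.

Lemma int_scale v k K : denq v = (2 ^ k)%N%:Z -> (k <= K)%N ->
  v * 2%:R ^+ K = (numq v * (2 ^ (K - k))%N%:Z)%:~R.
Proof.
move=> hd hk.
have -> : (2%:R ^+ K : rat) = 2%:R ^+ k * 2%:R ^+ (K - k) by rewrite -exprD subnKC.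
have h1 : v * 2%:R ^+ k = (numq v)%:~R by rewrite numqE hd natz_r natrX.
by rewrite mulrA h1 intrM natz_r natrX.
Qed.

Lemma le_sum_in (T : eqType) (s : seq T) (f : T -> nat) x : x \in s -> (f x <= \sum_(y <- s) f y)%N.
Proof.
elim: s => // a s IH; rewrite inE big_cons => /orP [/eqP ->|/IH h]; first exact: leq_addr.
exact: leq_trans h (leq_addl _ _).
Qed.

Lemma count_pairs (W : seq nat) (E' : seq (nat * nat)) : uniq E' ->
  (forall p, p \in E' -> [/\ p.1 \in W, p.2 \in W & F p.1 p.2 = 1%N]) ->
  (size E' <= DS F W)%N.
Proof.
move=> uE hE.
have -> : DS F W = count (fun p => F p.1 p.2 == 1%N) [seq (x, y) | x <- W, y <- W].
  rewrite /DS -sum1_count [RHS]big_mkcond big_allpairs /=.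
  by apply: eq_bigr => x _; apply: eq_bigr => y _; rewrite /F; case: (_ && _).
rewrite -size_filter; apply: uniq_leq_size => // p hp.
have [h1 h2 h3] := hE p hp; rewrite mem_filter h3 eqxx /=.
by case: p {hp} h1 h2 h3 => x y /= h1 h2 _; apply: allpairs_f.
Qed.

Lemma absz_lem (z : int) (n : nat) : (absz z <= n)%N -> (absz (z + n%:Z))%:Z = z + n%:Z.
Proof. move=> hz; lia. Qed.

Arguments le_sum_in {T s} f {x}.
Arguments int_scale {v k K}.

Theorem mainTheorem7 (V : seq rat) (E : seq (rat * rat)) :
  uniq V -> (1 <= size V)%N -> (forall v, v \in V -> dyadic v) ->
  uniq E ->
  (forall p, p \in E -> [/\ p.1 \in V, p.2 \in V, p.1 < p.2 & adj p.1 p.2]) ->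
  (size E <= e (size V))%N.
Proof.
move=> uV hsz hd uE hE.
have [K hK] := exK V hd.
pose psi (v : rat) := numq (v * 2%:R ^+ K).
have hpsi : forall v, v \in V -> (psi v)%:~R = v * 2%:R ^+ K.
  by move=> v /hK [k hk hdk]; rewrite /psi (int_scale hdk hk) numq_int.
pose N := (\sum_(v <- V) absz (psi v))%N.
pose phi (v : rat) := absz (psi v + N%:Z).
have hphi : forall v, v \in V -> (phi v)%:R = v * 2%:R ^+ K + N%:R :> rat.
  move=> v hv; have hle : (absz (psi v) <= N)%N := le_sum_in (fun v => absz (psi v)) hv.
  have h : (phi v)%:Z = psi v + N%:Z by rewrite /phi absz_lem.
  by rewrite -natz_r h intrD hpsi // natz_r.
have hinj : {in V &, injective phi}.
  move=> x y hx hy ex; have := congr1 (fun n : nat => n%:R : rat) ex.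
  rewrite /= !hphi // => /addIr /mulIf; apply.
  by rewrite expf_neq0 // pnatr_eq0.
have hedge : forall x y, x \in V -> y \in V -> x < y -> adj x y -> F (phi x) (phi y) = 1%N.
  move=> x y hx hy hxy [_ [i hi]].
  have hdd : (phi y)%:R - (phi x)%:R = (y - x) * 2%:R ^+ K :> rat.
    by rewrite !hphi // opprD addrACA subrr addr0 mulrBl.
  have hlt : (phi x < phi y)%N.
    by rewrite -(ltr_nat rat) -subr_gt0 hdd mulr_gt0 // ?subr_gt0 // exprn_gt0.
  have hd2 : ((phi y - phi x)%N)%:R = (2%:R : rat) ^ (i + K%:Z).
    have h20 : (2%:R : rat) != 0 by rewrite pnatr_eq0.
    rewrite (natrB _ (ltnW hlt)) hdd (expfzDr _ _ h20) -hi distrC.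
    have -> : `|y - x| = y - x by apply: gtr0_norm; rewrite subr_gt0.
    by [].
  rewrite /F hlt /=.
  suff hp : is_pow2 (phi y - phi x) by rewrite hp.
  move: hd2; case: (i + K%:Z) => j /= hj.
    apply/is_pow2P; exists j; apply/eqP; by rewrite -(eqr_nat rat) hj natrX.
  have : ((phi y - phi x)%N * 2 ^ j.+1)%:R = 1%:R :> rat.
    by rewrite natrM hj natrX mulVf // expf_neq0 // pnatr_eq0.
  move/eqP; rewrite eqr_nat => /eqP h.
  have h2 : (2 <= 2 ^ j.+1)%N by rewrite expnS leq_pmulr ?expn_gt0.
  exfalso; nia.
pose W := map phi V.
pose E' := map (fun p => (phi p.1, phi p.2)) E.
have hE' : (size E' <= DS F W)%N.
  apply: count_pairs.
    rewrite map_inj_in_uniq // => p q hp hq [e1 e2].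
    have [p1 p2 _ _] := hE p hp; have [q1 q2 _ _] := hE q hq.
    case: p q hp hq e1 e2 p1 p2 q1 q2 => [p1 p2] [q1 q2] /= _ _ e1 e2 hp1 hp2 hq1 hq2.
    by rewrite (hinj _ _ hp1 hq1 e1) (hinj _ _ hp2 hq2 e2).
  move=> p /mapP [q hq ->] /=; have [q1 q2 q3 q4] := hE q hq.
  by split; rewrite ?map_f // hedge.
have uW : uniq W by rewrite map_inj_in_uniq.
have := main_nat (\sum_(w <- W) w) W uW (fun x hx => le_sum_in (fun w => w) hx).
rewrite size_map -e_g => h.
by rewrite -(size_map (fun p => (phi p.1, phi p.2)) E); apply: leq_trans hE' h.
Qed.
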